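(* There exist topological spaces $K_1, K_2, K_3$, a continuous map $f: K_1 \to K_2$, and closed subsets $R \subseteq K_1 \times K_3$, $S \subseteq K_2 \times K_3$ such that $$\overline{f_!}(R \cap f^*S) \neq \overline{f_!}R \cap S,$$ where $\overline{f_!}T := \mathrm{cl}(f_!T)$ denotes the closure in $K_2 \times K_3$ of the pushforward.
   Context: For a map $f: A \to B$ and relations $T \subseteq A \times C$, $U \subseteq B \times C$: $f_!T = \{(y,z) \in B \times C : \exists x \in A,\ f(x) = y,\ (x,z) \in T\}$ and $f^*U = \{(x,z) \in A \times C : (f(x), z) \in U\}$. Spaces need not be compact (e.g. the paper's setting allows $K_1$ non-closed in a simplex). *)

(* Defs.v *)
From HB Require Import structures.
From mathcomp Require Import all_boot all_order all_algebra.
From mathcomp Require Import all_classical all_reals all_analysis.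
Set Implicit Arguments. Unset Strict Implicit. Unset Printing Implicit Defensive.
Local Open Scope classical_set_scope.

Definition rel_push {A B C : Type} (f : A -> B) (T : set (A * C)) : set (B * C) :=
  [set p | exists x : A, f x = p.1 /\ T (x, p.2)].

Definition rel_pull {A B C : Type} (f : A -> B) (U : set (B * C)) : set (A * C) :=
  [set p | U (f p.1, p.2)].

Definition rel_push_cl {A : Type} {B C : topologicalType} (f : A -> B)
  (T : set (A * C)) : set (B * C) := closure (rel_push f T).

(* Main.v *)
Require Import Defs.
From mathcomp Require Import all_boot all_order all_algebra.
From mathcomp Require Import all_classical all_reals all_analysis.
From mathcomp Require Import Rstruct Rstruct_topology.
Import Order.TTheory GRing.Theory Num.Theory.
Local Open Scope classical_set_scope.

Theorem mainTheorem10 :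
  exists (K1 K2 K3 : topologicalType) (f : K1 -> K2)
         (R : set (K1 * K3)) (S : set (K2 * K3)),
    continuous f /\ closed R /\ closed S /\
    rel_push_cl f (R `&` rel_pull f S) <> rel_push_cl f R `&` S.
Proof.
pose f : nat -> Rdefinitions.R := fun n => harmonic n.
exists nat, Rdefinitions.R, Rdefinitions.R, f, setT,
  [set p : Rdefinitions.R * Rdefinitions.R | p.1 = 0%R].
split; first by apply/continuousP => A _; exact: discrete_open.
split; first exact: closedT.
split.
  apply: (@preimage_closed _ _ fst [set x : Rdefinitions.R | x = 0%R]).
    by move=> x _; exact: cvg_fst.
  exact: closed_eq.
move=> E.
have H0 : rel_push f (setT `&` rel_pull f [set p : Rdefinitions.R * Rdefinitions.R | p.1 = 0%R]) = set0.
  apply/seteqP; split => // -[y z] [n [_ [_ /=]]].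
  rewrite /f /harmonic /= => /eqP; rewrite invr_eq0 pnatr_eq0.
  by [].
have : (rel_push_cl f setT `&` [set p : Rdefinitions.R * Rdefinitions.R | p.1 = 0%R]) (0%R, 0%R).
  split; last by [].
  have Hn0 : forall n, closure (rel_push f (setT : set (nat * Rdefinitions.R))) (f n, 0%R).
    by move=> n; apply: subset_closure; exists n.
  have Hn : \forall n \near \oo, closure (rel_push f (setT : set (nat * Rdefinitions.R))) (f n, 0%R).
    exact: (@nearW nat \oo _ _ Hn0).
  have Hl : (fun n => (f n, 0%R)) @ \oo --> ((0%R, 0%R) : Rdefinitions.R * Rdefinitions.R).
    exact: (cvg_pair (@cvg_harmonic Rdefinitions.R) (cvg_cst (0%R : Rdefinitions.R))).
  have HH := (closed_cvg (closure (rel_push f (setT : set (nat * Rdefinitions.R)))) (@closed_closure _ _) Hn _ Hl).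
  exact: HH.
by rewrite -E /rel_push_cl H0 closure0.
Qed.
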